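(* Let $\mu$ be the measure associated with a sequence $(p_n,q_n)_{n\ge0}$, $0\le p_n,q_n\le1$, by the non-homogeneous Markov rule, and let $c_n=\frac{-1}{n\log2}\sum_{I\in\mathcal F_n}\mu(I)\log\mu(I)$. Then for $\mu$-almost every $x\in\mathbb K$, $$\lim_{n\to\infty}\left[\frac{\log\mu(I_n(x))}{-n\log 2}-c_n\right]=0.$$
   Context: $\mathbb K=\{0,1\}^{\mathbb N}$; $\mathcal F_n$ is the set of cylinders $I_{\epsilon_1\dots\epsilon_n}$ of generation $n$; $I_n(x)$ is the cylinder of $\mathcal F_n$ containing $x$. $\mu$: $\mu(I_0)=p_0$, $\mu(I_1)=1-p_0$, and for $n\ge1$, $I=I_{\epsilon_1\dots\epsilon_n}$, the child $I_{\epsilon_1\dots\epsilon_n0}$ receives the proportion $p_n$ (resp. $q_n$) of $\mu(I)$ and $I_{\epsilon_1\dots\epsilon_n1}$ the proportion $1-p_n$ (resp. $1-q_n$) when $\epsilon_n=0$ (resp. $\epsilon_n=1$). Convention $0\log0=0$. *)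

(* Defs.v *)
From Stdlib Require Import Reals List.
Open Scope R_scope.

(* K = {0,1}^N : points are x : nat -> bool, with epsilon_{k+1} = x k
   (false = 0, true = 1). A cylinder of generation n is given by a word
   w = [eps_1; ...; eps_n] : list bool of length n. *)

(* Proportion given to the child with last letter b, at step k (going from
   generation k to k+1), given the previous letter prev (None when k = 0). *)
Definition step_factor (p q : nat -> R) (k : nat) (prev : option bool) (b : bool) : R :=
  match prev with
  | Some true => if b then 1 - q k else q k
  | _ => if b then 1 - p k else p k
  end.

Fixpoint mass_aux (p q : nat -> R) (k : nat) (prev : option bool) (w : list bool) : R :=
  match w with
  | nil => 1
  | b :: w' => step_factor p q k prev b * mass_aux p q (S k) (Some b) w'
  end.

Definition cyl_mass (p q : nat -> R) (w : list bool) : R := mass_aux p q 0 None w.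

Fixpoint prefix (x : nat -> bool) (n : nat) : list bool :=
  match n with
  | O => nil
  | S m => prefix x m ++ (x m :: nil)
  end.

Definition in_cyl (w : list bool) (x : nat -> bool) : Prop :=
  prefix x (length w) = w.

Fixpoint words (n : nat) : list (list bool) :=
  match n with
  | O => nil :: nil
  | S m => flat_map (fun w => (false :: w) :: (true :: w) :: nil) (words m)
  end.

Definition xlogx (t : R) : R := if Req_EM_T t 0 then 0 else t * ln t.

Definition c_seq (p q : nat -> R) (n : nat) : R :=
  - / (INR n * ln 2) * fold_right Rplus 0 (map (fun w => xlogx (cyl_mass p q w)) (words n)).

(* mu-null sets: sets of outer measure 0 for the outer measure generated by
   mu on cylinders (which is the outer measure of the extension of mu). *)
Definition mu_null (p q : nat -> R) (N : (nat -> bool) -> Prop) : Prop :=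
  forall eps : R, eps > 0 ->
    exists W : nat -> list bool,
      (forall x, N x -> exists k, in_cyl (W k) x) /\
      (forall M : nat, fold_right Rplus 0 (map (fun k => cyl_mass p q (W k)) (seq 0 M)) <= eps).

(* Main.v *)
Require Import Defs.
From Stdlib Require Import Reals Lia Psatz Lra List Classical.
Open Scope R_scope.

Lemma ln_0 : ln 0 = 0.
Proof. unfold ln; destruct (Rlt_dec 0 0) as [h|h]; [exfalso; exact (Rlt_irrefl _ h)|auto]. Qed.

Lemma ln_nonpos t : 0 <= t <= 1 -> ln t <= 0.
Proof.
  intros [H0 H1]. destruct (Req_dec t 0) as [->|Hn]; [rewrite ln_0; lra|].
  destruct (Req_dec t 1) as [->|Hne1]; [rewrite ln_1; lra|].
  rewrite <- ln_1. left; apply ln_increasing; lra.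
Qed.

Lemma tln2 t : 0 <= t <= 1 -> t * (ln t)^2 <= 4.
Proof.
  intros Ht. destruct (Req_dec t 0) as [->|Hn]; [lra|].
  assert (Hpos : 0 < t) by lra.
  pose proof (ln_nonpos t Ht).
  set (v := - ln t / 2).
  assert (Hv : 0 <= v) by (unfold v; lra).
  assert (Hev := exp_ineq1_le v).
  assert (Hid : t * (exp v * exp v) = 1).
  { rewrite <- exp_plus. rewrite <- (exp_ln t Hpos) at 1. rewrite <- exp_plus.
    replace (ln t + (v + v)) with 0 by (unfold v; lra). apply exp_0. }
  assert (Hlt : ln t = - 2 * v) by (unfold v; lra).
  rewrite Hlt. assert (v * v <= exp v * exp v) by nra. nra.
Qed.

Lemma ent1 y : 0 <= y <= 1 -> - (y * ln y) <= 2 * sqrt y.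
Proof.
  intros Hy. destruct (Req_dec y 0) as [->|Hn]; [rewrite ln_0, sqrt_0; lra|].
  assert (Hpos : 0 < y) by lra.
  pose proof (ln_nonpos y Hy).
  set (v := - ln y / 2).
  assert (Hv : 0 <= v) by (unfold v; lra).
  assert (Hev := exp_ineq1_le v).
  assert (Hsq : sqrt y = exp (- v)).
  { rewrite <- (exp_ln y Hpos) at 1. replace (ln y) with (-v + -v) by (unfold v; lra).
    rewrite exp_plus. apply sqrt_square. left; apply exp_pos. }
  assert (Hy2 : y = exp (-v) * exp (-v)).
  { rewrite <- exp_plus. rewrite <- (exp_ln y Hpos) at 1. f_equal. unfold v; lra. }
  assert (Hinv : exp v * exp (-v) = 1) by (rewrite <- exp_plus; replace (v + - v) with 0 by lra; apply exp_0).
  rewrite Hsq. replace (ln y) with (-2 * v) by (unfold v; lra). rewrite Hy2.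
  pose proof (exp_pos (-v)).
  assert (v * exp (-v) <= 1) by nra.
  assert (v * exp (-v) * exp (-v) <= 1 * exp (-v)) by (apply Rmult_le_compat_r; lra).
  lra.
Qed.

Lemma ent2 y : 0 <= y <= 1 -> - ((1-y) * ln (1-y)) <= y.
Proof.
  intros Hy. set (z := 1 - y).
  assert (Hz0 : 0 <= z) by (unfold z; lra).
  destruct (Rle_lt_or_eq_dec 0 z Hz0) as [Hpos|Hz]; [|rewrite <- Hz, ln_0; lra].
  pose proof (exp_ineq1_le (ln (/ z))). rewrite exp_ln in H by (apply Rinv_0_lt_compat; lra).
  rewrite ln_Rinv in H by lra.
  assert (z * (- ln z) <= z * (/ z - 1)) by (apply Rmult_le_compat_l; lra).
  rewrite Rmult_minus_distr_l, Rinv_r in H0 by lra. unfold z in *; lra.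
Qed.

Definition Hent (f : R) : R := - (f * ln f + (1 - f) * ln (1 - f)).

Lemma Hent_nonneg f : 0 <= f <= 1 -> 0 <= Hent f.
Proof.
  intros Hf. unfold Hent. pose proof (ln_nonpos f Hf). pose proof (ln_nonpos (1-f)).
  assert (ln (1-f) <= 0) by (apply H0; lra). nra.
Qed.

Lemma sqrt_ge_id f : 0 <= f <= 1 -> f <= sqrt f.
Proof.
  intros Hf. pose proof (sqrt_sqrt f (proj1 Hf)). pose proof (sqrt_pos f).
  assert (sqrt f <= 1) by (rewrite <- sqrt_1; apply sqrt_le_1_alt; lra). nra.
Qed.

Lemma Hent_le f : 0 <= f <= 1 -> Hent f <= 3 * sqrt f.
Proof.
  intros Hf. unfold Hent. pose proof (ent1 f Hf). pose proof (ent2 f Hf).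
  pose proof (sqrt_ge_id f Hf). lra.
Qed.

Lemma Hent_sym f : Hent (1 - f) = Hent f.
Proof. unfold Hent. replace (1 - (1 - f)) with f by ring. ring. Qed.

Lemma Hent_le' f : 0 <= f <= 1 -> Hent f <= 3 * sqrt (1 - f).
Proof. intros Hf. rewrite <- Hent_sym. apply Hent_le; lra. Qed.

Lemma ent_diff a b : 0 <= a <= 1 -> 0 <= b <= 1 ->
  Rabs (Hent a - Hent b) <= 3 * sqrt (1 - Rabs (a - b)).
Proof.
  intros Ha Hb. pose proof (Hent_nonneg a Ha). pose proof (Hent_nonneg b Hb).
  assert (Hm : Hent a <= 3 * sqrt (1 - Rabs (a - b)) /\ Hent b <= 3 * sqrt (1 - Rabs (a - b))).
  { unfold Rabs; destruct (Rcase_abs (a - b)).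
    - split.
      + eapply Rle_trans; [apply Hent_le; auto|]. apply Rmult_le_compat_l; [lra|]. apply sqrt_le_1_alt; lra.
      + eapply Rle_trans; [apply Hent_le'; auto|]. apply Rmult_le_compat_l; [lra|]. apply sqrt_le_1_alt; lra.
    - split.
      + eapply Rle_trans; [apply Hent_le'; auto|]. apply Rmult_le_compat_l; [lra|]. apply sqrt_le_1_alt; lra.
      + eapply Rle_trans; [apply Hent_le; auto|]. apply Rmult_le_compat_l; [lra|]. apply sqrt_le_1_alt; lra. }
  destruct Hm. unfold Rabs at 1; destruct (Rcase_abs (Hent a - Hent b)); lra.
Qed.

Lemma prod_le_e a b f : 0 <= a <= 1 -> 0 <= b <= 1 -> (f = a \/ f = b) ->
  f * (1 - f) <= 1 - Rabs (a - b).
Proof.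
  intros Ha Hb Hf. unfold Rabs; destruct (Rcase_abs (a - b)); destruct Hf; subst; nra.
Qed.

Lemma var_term f c : 0 <= f <= 1 -> 0 <= c <= 1 ->
  f * (1 - f) * (c * ln f - c * ln (1 - f))^2 <= 16 * c.
Proof.
  intros Hf Hc. pose proof (tln2 f Hf). pose proof (tln2 (1-f)).
  assert (H1 : (1 - f) * ln (1 - f) ^ 2 <= 4) by (apply H0; lra).
  set (a := ln f) in *. set (b := ln (1 - f)) in *. clearbody a b.
  assert (f * (1-f) * (c*a - c*b)^2 <= c^2 * (2 * f * a^2 + 2 * (1-f) * b^2)).
  { assert (0 <= (a+b)^2) by apply pow2_ge_0.
    assert ((a - b)^2 <= 2*a^2 + 2*b^2) by nra.
    assert (0 <= f * (1-f)) by nra.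
    assert (f * (1-f) * (a - b)^2 <= f*(1-f)*(2*a^2 + 2*b^2)) by (apply Rmult_le_compat_l; lra).
    assert (0 <= a^2) by apply pow2_ge_0. assert (0 <= b^2) by apply pow2_ge_0.
    assert (0 <= f*a^2) by (apply Rmult_le_pos; lra).
    assert (0 <= (1-f)*b^2) by (apply Rmult_le_pos; lra).
    assert (f * (1-f) * (a - b)^2 <= 2*f*a^2 + 2*(1-f)*b^2) by nra.
    replace ((c*a - c*b)^2) with (c^2 * (a-b)^2) by ring.
    assert (0 <= c^2) by apply pow2_ge_0. nra. }
  nra.
Qed.

Section S.
Variables (p q : nat -> R).
Hypotheses (hp : forall n, 0 <= p n <= 1) (hq : forall n, 0 <= q n <= 1).

Notation sf := (step_factor p q).

Lemma sf_bounds k s b : 0 <= sf k s b <= 1.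
Proof. destruct s as [[|]|], b; simpl; specialize (hp k); specialize (hq k); lra. Qed.

Lemma sf_sum k s : sf k s false + sf k s true = 1.
Proof. destruct s as [[|]|]; simpl; lra. Qed.

Lemma mass_nonneg k s w : 0 <= mass_aux p q k s w.
Proof.
  revert k s; induction w as [|b w IH]; intros k s; simpl; [lra|].
  apply Rmult_le_pos; [apply sf_bounds|apply IH].
Qed.

Definition sumw (n:nat) (G : list bool -> R) : R := fold_right Rplus 0 (map G (words n)).

Lemma sumw_S n G : sumw (S n) G = sumw n (fun w => G (false::w) + G (true::w)).
Proof.
  unfold sumw; simpl. induction (words n) as [|a l IH]; simpl; [lra|].
  rewrite IH; lra.
Qed.

Lemma sumw_0 G : sumw 0 G = G nil.
Proof. unfold sumw; simpl; lra. Qed.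

Definition Ex k s n (F : list bool -> R) : R := sumw n (fun w => mass_aux p q k s w * F w).

Lemma Ex_0 k s F : Ex k s 0 F = F nil.
Proof. unfold Ex; rewrite sumw_0; simpl; lra. Qed.

Lemma sumw_ext n F G : (forall w, F w = G w) -> sumw n F = sumw n G.
Proof. intros H; unfold sumw; f_equal; apply map_ext; auto. Qed.

Lemma sumw_plus n F G : sumw n (fun w => F w + G w) = sumw n F + sumw n G.
Proof. unfold sumw; induction (words n); simpl; lra. Qed.

Lemma sumw_scal n a F : sumw n (fun w => a * F w) = a * sumw n F.
Proof. unfold sumw; induction (words n); simpl; lra. Qed.

Lemma Ex_S k s n F : Ex k s (S n) F =
  sf k s false * Ex (S k) (Some false) n (fun w => F (false::w)) +
  sf k s true * Ex (S k) (Some true) n (fun w => F (true::w)).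
Proof.
  unfold Ex; rewrite sumw_S; simpl.
  rewrite <- !sumw_scal, <- sumw_plus. apply sumw_ext; intros; lra.
Qed.

Lemma Ex_ext k s n F G : (forall w, F w = G w) -> Ex k s n F = Ex k s n G.
Proof. intros H; unfold Ex; apply sumw_ext; intros; rewrite H; auto. Qed.

Lemma Ex_lin k s n a b F G : Ex k s n (fun w => a * F w + b * G w) = a * Ex k s n F + b * Ex k s n G.
Proof.
  unfold Ex. rewrite <- !sumw_scal, <- sumw_plus. apply sumw_ext; intros; lra.
Qed.

Lemma Ex_const k s n c : Ex k s n (fun _ => c) = c.
Proof.
  revert k s; induction n; intros k s; [rewrite Ex_0; auto|].
  rewrite Ex_S, !IHn. pose proof (sf_sum k s). nra.
Qed.

Lemma Ex_le k s n F G : (forall w, F w <= G w) -> Ex k s n F <= Ex k s n G.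
Proof.
  intros H; revert k s F G H; induction n; intros k s F G H.
  - rewrite !Ex_0; auto.
  - rewrite !Ex_S. pose proof (sf_bounds k s false); pose proof (sf_bounds k s true).
    pose proof (IHn (S k) (Some false) (fun w => F (false::w)) (fun w => G (false::w)) (fun w => H _)).
    pose proof (IHn (S k) (Some true) (fun w => F (true::w)) (fun w => G (true::w)) (fun w => H _)).
    nra.
Qed.

Lemma Ex_affine k s n a F d : Ex k s n (fun w => a * F w + d) = a * Ex k s n F + d.
Proof.
  transitivity (a * Ex k s n F + d * Ex k s n (fun _ => 1)).
  - rewrite <- Ex_lin. apply Ex_ext; intros; lra.
  - rewrite Ex_const; ring.
Qed.

Lemma Ex_sq_shift k s n F d : Ex k s n (fun w => (F w + d)^2) =
  Ex k s n (fun w => (F w)^2) + 2 * d * Ex k s n F + d^2.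
Proof.
  transitivity (Ex k s n (fun w => 1 * ((F w)^2 + 2 * d * F w) + d^2)).
  - apply Ex_ext; intros; ring.
  - rewrite Ex_affine, Rmult_1_l.
    pose proof (Ex_lin k s n 1 (2*d) (fun w => F w ^2) F) as E. cbv beta in E.
    rewrite (Ex_ext k s n _ (fun w => 1 * F w ^ 2 + 2 * d * F w)) by (intros; ring).
    rewrite E. ring.
Qed.


Lemma Ex_add_const k s n d F : Ex k s n (fun w => d + F w) = d + Ex k s n F.
Proof.
  rewrite (Ex_ext _ _ _ _ (fun w => 1 * F w + d)) by (intros; ring).
  rewrite Ex_affine; ring.
Qed.

Fixpoint ellc (c : nat -> R) (k : nat) (s : option bool) (w : list bool) : R :=
  match w with
  | nil => 0
  | b :: w' => c k * ln (sf k s b) + ellc c (S k) (Some b) w'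
  end.

Definition Mn c k s n := Ex k s n (ellc c k s).
Definition Vn c k s n := Ex k s n (fun w => (ellc c k s w - Mn c k s n)^2).
Definition Dl c k n := Mn c k (Some false) n - Mn c k (Some true) n.
Fixpoint cnt (c : nat -> R) k n : R := match n with O => 0 | S n => c k + cnt c (S k) n end.
Definition ek k := 1 - Rabs (p k - q k).

Lemma Mn_0 c k s : Mn c k s 0 = 0.
Proof. unfold Mn; rewrite Ex_0; reflexivity. Qed.

Lemma Mn_S c k s n : Mn c k s (S n) =
  sf k s false * (c k * ln (sf k s false) + Mn c (S k) (Some false) n) +
  sf k s true * (c k * ln (sf k s true) + Mn c (S k) (Some true) n).
Proof. unfold Mn at 1; rewrite Ex_S; simpl. rewrite !Ex_add_const. reflexivity. Qed.

Lemma Vn_S c k s n : Vn c k s (S n) =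
  sf k s false * (Vn c (S k) (Some false) n +
     (c k * ln (sf k s false) + Mn c (S k) (Some false) n - Mn c k s (S n))^2) +
  sf k s true * (Vn c (S k) (Some true) n +
     (c k * ln (sf k s true) + Mn c (S k) (Some true) n - Mn c k s (S n))^2).
Proof.
  unfold Vn at 1; rewrite Ex_S. simpl ellc.
  set (M := Mn c k s (S n)).
  assert (G : forall b, Ex (S k) (Some b) n (fun w => (c k * ln (sf k s b) + ellc c (S k) (Some b) w - M)^2)
     = Vn c (S k) (Some b) n + (c k * ln (sf k s b) + Mn c (S k) (Some b) n - M)^2).
  { intros b.
    rewrite (Ex_ext _ _ _ _ (fun w => ((ellc c (S k) (Some b) w - Mn c (S k) (Some b) n) +
           (c k * ln (sf k s b) + Mn c (S k) (Some b) n - M))^2)) by (intros; ring).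
    rewrite Ex_sq_shift.
    rewrite (Ex_ext _ _ _ (fun w => ellc c (S k) (Some b) w - Mn c (S k) (Some b) n) (fun w => 1 * ellc c (S k) (Some b) w + - Mn c (S k) (Some b) n)) by (intros; ring).
    rewrite Ex_affine. unfold Vn, Mn. ring. }
  rewrite !G. reflexivity.
Qed.

Lemma Dl_S c k n : Dl c k (S n) = c k * (Hent (q k) - Hent (p k)) + (p k - q k) * Dl c (S k) n.
Proof. unfold Dl at 1; rewrite !Mn_S; simpl. unfold Dl, Hent. ring. Qed.

Lemma sf_prod_le k s : sf k s false * sf k s true <= ek k.
Proof.
  unfold ek. pose proof (hp k); pose proof (hq k).
  destruct s as [[|]|]; simpl.
  - replace (q k * (1 - q k)) with (q k * (1 - q k)) by ring. apply prod_le_e; auto.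
  - apply prod_le_e; auto.
  - apply prod_le_e; auto.
Qed.

Lemma sf_true k s : sf k s true = 1 - sf k s false.
Proof. pose proof (sf_sum k s); lra. Qed.

Lemma Vn_step c k s n : 0 <= c k <= 1 ->
  Vn c k s (S n) <= sf k s false * Vn c (S k) (Some false) n + sf k s true * Vn c (S k) (Some true) n
    + 32 * c k + 2 * ek k * (Dl c (S k) n)^2.
Proof.
  intros Hc. rewrite Vn_S. rewrite (Mn_S c k s n).
  pose proof (sf_bounds k s false) as Hf. pose proof (sf_prod_le k s) as He.
  rewrite sf_true in *. set (f := sf k s false) in *.
  set (M0 := Mn c (S k) (Some false) n). set (M1 := Mn c (S k) (Some true) n).
  set (V0 := Vn c (S k) (Some false) n). set (V1 := Vn c (S k) (Some true) n).
  assert (HD : Dl c (S k) n = M0 - M1) by reflexivity. rewrite HD.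
  set (u := c k * ln f - c k * ln (1 - f)).
  pose proof (var_term f (c k) Hf Hc) as Hv. fold u in Hv.
  set (Y0 := c k * ln f + M0). set (Y1 := c k * ln (1-f) + M1).
  assert (Hid : f * (V0 + (Y0 - (f * Y0 + (1 - f) * Y1))^2) + (1 - f) * (V1 + (Y1 - (f * Y0 + (1 - f) * Y1))^2)
     = f * V0 + (1 - f) * V1 + f * (1 - f) * (u + (M0 - M1))^2).
  { unfold Y0, Y1, u. ring. }
  rewrite Hid.
  assert (Hsq : (u + (M0 - M1))^2 <= 2 * u^2 + 2 * (M0 - M1)^2).
  { assert (0 <= (u - (M0 - M1))^2) by apply pow2_ge_0. nra. }
  assert (0 <= f * (1 - f)) by nra.
  assert (f * (1 - f) * (u + (M0 - M1))^2 <= f * (1 - f) * (2 * u^2 + 2 * (M0 - M1)^2)) by (apply Rmult_le_compat_l; lra).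
  assert (0 <= (M0 - M1)^2) by apply pow2_ge_0.
  assert (f * (1 - f) * (M0 - M1)^2 <= ek k * (M0 - M1)^2) by (apply Rmult_le_compat_r; lra).
  clearbody f M0 M1 V0 V1 u Y0 Y1. nra.
Qed.

Lemma potential X Y a c : 0 <= X -> 0 <= Y -> 0 <= a <= 1 -> 0 <= c <= 1 ->
  X <= 3 * c * a + (1 - a^2) * Y -> 4 * X^2 <= 4 * Y^2 - 2 * a^2 * Y^2 + 108 * c.
Proof.
  intros HX HY Ha Hc HB.
  set (B := 3 * c * a + (1 - a^2) * Y) in *.
  assert (HX2 : X^2 <= B^2) by (apply pow_incr; lra).
  assert (hc2 : c^2 <= c) by nra.
  assert (ha2 : a^2 <= 1) by nra.
  assert (h1 : c^2 * a^2 <= c).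
  { assert (0 <= c^2) by apply pow2_ge_0. assert (c^2 * a^2 <= c^2 * 1) by (apply Rmult_le_compat_l; lra). lra. }
  assert (h0 : 0 <= (a*Y - 6*c)^2) by apply pow2_ge_0.
  assert (h2 : 6 * c * a * (1 - a^2) * Y <= a^2 * Y^2 / 2 + 18 * c).
  { assert (0 <= c * a * a^2 * Y) by (repeat apply Rmult_le_pos; nra).
    assert (c^2 <= c) by nra. nra. }
  assert (h3 : (1 - a^2)^2 * Y^2 <= (1 - a^2) * Y^2).
  { assert (0 <= Y^2) by apply pow2_ge_0. assert (0 <= a^2 <= 1) by nra. nra. }
  assert (B^2 = 9 * (c^2 * a^2) + 6 * c * a * (1 - a^2) * Y + (1 - a^2)^2 * Y^2) by (unfold B; ring).
  nra.
Qed.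

Lemma Dl_bound c k n : 0 <= c k <= 1 ->
  Rabs (Dl c k (S n)) <= 3 * c k * sqrt (ek k) + (1 - ek k) * Rabs (Dl c (S k) n).
Proof.
  intros Hc. rewrite Dl_S. eapply Rle_trans; [apply Rabs_triang|].
  rewrite !Rabs_mult. rewrite (Rabs_pos_eq (c k)) by lra.
  pose proof (ent_diff (p k) (q k) (hp k) (hq k)) as Hd.
  rewrite Rabs_minus_sym in Hd.
  assert (Rabs (p k - q k) = 1 - ek k) by (unfold ek; ring).
  rewrite H. unfold ek in *.
  assert (c k * Rabs (Hent (q k) - Hent (p k)) <= c k * (3 * sqrt (1 - Rabs (p k - q k))))
    by (apply Rmult_le_compat_l; lra).
  lra.
Qed.

Lemma ek_bounds k : 0 <= ek k <= 1.
Proof.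
  unfold ek. pose proof (hp k); pose proof (hq k).
  unfold Rabs; destruct (Rcase_abs (p k - q k)); lra.
Qed.

Lemma var_main c : (forall i, 0 <= c i <= 1) ->
  forall n k s, Vn c k s n + 4 * (Dl c k n)^2 <= 140 * cnt c k n.
Proof.
  intros Hc n. induction n as [|n IH]; intros k s.
  - unfold Vn, Dl. rewrite !Mn_0, Ex_0. simpl. lra.
  - simpl cnt.
    pose proof (Vn_step c k s n (Hc k)) as H1.
    pose proof (IH (S k) (Some false)) as H0. pose proof (IH (S k) (Some true)) as H2.
    pose proof (sf_bounds k s false); pose proof (sf_bounds k s true); pose proof (sf_sum k s).
    pose proof (Dl_bound c k n (Hc k)) as HD.
    pose proof (ek_bounds k) as He.
    set (a := sqrt (ek k)).
    assert (Ha2 : a^2 = ek k) by (unfold a; simpl; rewrite Rmult_1_r; apply sqrt_sqrt; lra).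
    assert (Ha : 0 <= a <= 1).
    { split; [apply sqrt_pos|]. unfold a; rewrite <- sqrt_1; apply sqrt_le_1_alt; lra. }
    fold a in HD. replace (1 - ek k) with (1 - a^2) in HD by lra.
    pose proof (potential _ _ a (c k) (Rabs_pos _) (Rabs_pos _) Ha (Hc k) HD) as HP.
    rewrite !pow2_abs in HP.
    rewrite <- Ha2 in H1.
    set (V0 := Vn c (S k) (Some false) n) in *. set (V1 := Vn c (S k) (Some true) n) in *.
    set (D := Dl c (S k) n) in *. set (C := cnt c (S k) n) in *.
    assert (sf k s false * V0 + sf k s true * V1 <= 140 * C - 4 * D^2).
    { assert (sf k s false * V0 <= sf k s false * (140 * C - 4 * D^2)) by (apply Rmult_le_compat_l; lra).
      assert (sf k s true * V1 <= sf k s true * (140 * C - 4 * D^2)) by (apply Rmult_le_compat_l; lra).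
      nra. }
    lra.
Qed.

Lemma var_bound c : (forall i, 0 <= c i <= 1) -> forall n k s, Vn c k s n <= 140 * cnt c k n.
Proof.
  intros Hc n k s. pose proof (var_main c Hc n k s). assert (0 <= (Dl c k n)^2) by apply pow2_ge_0. lra.
Qed.

Definition cone : nat -> R := fun _ => 1.
Definition cge (m : nat) : nat -> R := fun i => if (m <=? i)%nat then 1 else 0.

Lemma cone_b i : 0 <= cone i <= 1. Proof. unfold cone; lra. Qed.
Lemma cge_b m i : 0 <= cge m i <= 1. Proof. unfold cge; destruct (m <=? i)%nat; lra. Qed.

Lemma ellc_split m w : forall k s,
  ellc cone k s w = ellc cone k s (firstn (m - k) w) + ellc (cge m) k s w.
Proof.
  induction w as [|b w IH]; intros k s.
  - rewrite firstn_nil; simpl; lra.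
  - simpl ellc at 1 3. rewrite (IH (S k) (Some b)).
    destruct (Nat.leb_spec m k) as [H|H].
    + assert (E: cge m k = 1) by (unfold cge; apply Nat.leb_le in H; rewrite H; auto). rewrite E.
      replace (m - k)%nat with 0%nat by lia. replace (m - S k)%nat with 0%nat by lia.
      simpl firstn. cbn [ellc]. unfold cone. lra.
    + assert (E: cge m k = 0) by (unfold cge; apply Nat.leb_gt in H; rewrite H; auto). rewrite E.
      replace (m - k)%nat with (S (m - S k)) by lia. simpl firstn. cbn [ellc]. unfold cone. lra.
Qed.

Lemma Ex_firstn j : forall n k s F, (j <= n)%nat ->
  Ex k s n (fun w => F (firstn j w)) = Ex k s j F.
Proof.
  induction j as [|j IH]; intros n k s F Hjn.
  - simpl. rewrite Ex_const, Ex_0. reflexivity.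
  - destruct n as [|n]; [lia|]. rewrite !Ex_S. simpl.
    rewrite (IH n (S k) (Some false) (fun u => F (false :: u))) by lia.
    rewrite (IH n (S k) (Some true) (fun u => F (true :: u))) by lia. reflexivity.
Qed.

Lemma Mn_split m n : (m <= n)%nat ->
  Mn cone 0 None n = Mn cone 0 None m + Mn (cge m) 0 None n.
Proof.
  intros Hmn. unfold Mn at 1.
  rewrite (Ex_ext _ _ _ _ (fun w => 1 * ellc cone 0 None (firstn m w) + 1 * ellc (cge m) 0 None w)).
  2:{ intros w. rewrite (ellc_split m w 0 None). rewrite Nat.sub_0_r. ring. }
  rewrite Ex_lin. rewrite (Ex_firstn m n 0 None (ellc cone 0 None)) by auto. unfold Mn; ring.
Qed.

Lemma cnt_cone k n : cnt cone k n = INR n.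
Proof.
  revert k; induction n; intros k; simpl cnt; [simpl; lra|].
  rewrite IHn, S_INR. unfold cone; lra.
Qed.

Lemma cnt_cge m n : forall k, cnt (cge m) k n = INR (n - (m - k)).
Proof.
  induction n as [|n IH]; intros k; simpl cnt; [simpl; lra|].
  rewrite IH. unfold cge. destruct (Nat.leb_spec m k).
  - replace (n - (m - S k))%nat with n by lia. replace (S n - (m - k))%nat with (S n) by lia.
    rewrite S_INR; lra.
  - replace (S n - (m - k))%nat with (n - (m - S k))%nat by lia. lra.
Qed.

Definition Zf n w := ellc cone 0 None w - Mn cone 0 None n.
Definition Zw m n w := ellc (cge m) 0 None w - Mn (cge m) 0 None n.

Lemma Z_split m n w : (m <= n)%nat -> Zf n w = Zf m (firstn m w) + Zw m n w.
Proof.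
  intros Hmn. unfold Zf, Zw. rewrite (Mn_split m n Hmn).
  rewrite (ellc_split m w 0 None), Nat.sub_0_r. ring.
Qed.

Lemma varZf n : Ex 0 None n (fun w => (Zf n w)^2) <= 140 * INR n.
Proof. rewrite <- (cnt_cone 0 n). apply (var_bound cone cone_b). Qed.

Lemma varZw m n : Ex 0 None n (fun w => (Zw m n w)^2) <= 140 * INR (n - m).
Proof.
  pose proof (var_bound (cge m) (cge_b m) n 0 None). rewrite cnt_cge, Nat.sub_0_r in H. exact H.
Qed.

Definition msum (l : list (list bool)) : R := fold_right Rplus 0 (map (cyl_mass p q) l).

Lemma filter_sum_le (l : list (list bool)) (P : list bool -> bool) (a b : list bool -> R) :
  (forall w, 0 <= b w) -> (forall w, P w = true -> a w <= b w) ->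
  fold_right Rplus 0 (map a (filter P l)) <= fold_right Rplus 0 (map b l).
Proof.
  intros Hb Hab. induction l as [|w l IH]; simpl; [lra|].
  destruct (P w) eqn:E; simpl.
  - specialize (Hab w E). lra.
  - specialize (Hb w). lra.
Qed.

Definition badf (t : R) (G : list bool -> R) : list bool -> bool :=
  fun w => if Rle_dec t (Rabs (G w)) then true else false.

Lemma cheb n t G : 0 < t -> msum (filter (badf t G) (words n)) <= Ex 0 None n (fun w => (G w)^2) / t^2.
Proof.
  intros Ht. unfold Rdiv. rewrite Rmult_comm. unfold Ex. rewrite <- sumw_scal. unfold sumw, msum.
  apply filter_sum_le.
  - intros w. pose proof (mass_nonneg 0 None w). assert (0 <= (G w)^2) by apply pow2_ge_0.
    assert (0 < / t^2) by (apply Rinv_0_lt_compat; apply pow_lt; lra).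
    apply Rmult_le_pos; [lra|]. apply Rmult_le_pos; lra.
  - intros w. unfold badf. destruct (Rle_dec t (Rabs (G w))) as [Hle|]; [|discriminate]. intros _.
    unfold cyl_mass. pose proof (mass_nonneg 0 None w).
    assert (t^2 <= (G w)^2).
    { rewrite <- (pow2_abs (G w)). apply pow_incr; lra. }
    assert (1 <= / t^2 * (G w)^2).
    { assert (0 < t^2) by (apply pow_lt; lra).
      apply (Rmult_le_reg_l (t^2)); [lra|]. rewrite <- Rmult_assoc, Rinv_r by lra. lra. }
    rewrite <- Rmult_assoc, (Rmult_comm (/ t^2)), Rmult_assoc.
    rewrite <- (Rmult_1_r (mass_aux p q 0 None w)) at 1. apply Rmult_le_compat_l; lra.
Qed.

Lemma ln_mass w : forall k s, 0 < mass_aux p q k s w -> ln (mass_aux p q k s w) = ellc cone k s w.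
Proof.
  induction w as [|b w IH]; intros k s Hpos; simpl in *; [apply ln_1|].
  pose proof (sf_bounds k s b). pose proof (mass_nonneg (S k) (Some b) w).
  assert (0 < sf k s b).
  { destruct (Rle_lt_or_eq_dec 0 (sf k s b) (proj1 H)) as [h|h]; auto. rewrite <- h in Hpos. lra. }
  assert (0 < mass_aux p q (S k) (Some b) w).
  { destruct (Rle_lt_or_eq_dec 0 _ H0) as [h|h]; auto. rewrite <- h in Hpos. lra. }
  rewrite ln_mult by auto. rewrite IH by auto. unfold cone. ring.
Qed.

Lemma xlogx_eq w : xlogx (cyl_mass p q w) = cyl_mass p q w * ellc cone 0 None w.
Proof.
  unfold xlogx, cyl_mass. destruct (Req_EM_T (mass_aux p q 0 None w) 0) as [E|E].
  - rewrite E; ring.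
  - rewrite ln_mass; auto. pose proof (mass_nonneg 0 None w).
    destruct (Rle_lt_or_eq_dec 0 _ H); auto. congruence.
Qed.

Lemma c_seq_eq n : c_seq p q n = - / (INR n * ln 2) * Mn cone 0 None n.
Proof.
  unfold c_seq. f_equal. unfold Mn, Ex, sumw. f_equal. apply map_ext. intros w.
  rewrite xlogx_eq. reflexivity.
Qed.

End S.

Lemma words_in w : In w (words (length w)).
Proof.
  induction w as [|b w IH]; simpl; [auto|].
  apply in_flat_map. exists w; split; auto. destruct b; simpl; auto.
Qed.

Lemma prefix_len x n : length (prefix x n) = n.
Proof. induction n; simpl; auto. rewrite length_app, IHn; simpl; lia. Qed.

Lemma prefix_add x m d : exists s, prefix x (m + d) = prefix x m ++ s.
Proof.
  induction d as [|d [s IH]].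
  - exists nil. rewrite Nat.add_0_r, app_nil_r; auto.
  - exists (s ++ x (m + d)%nat :: nil). rewrite Nat.add_succ_r. simpl. rewrite IH, app_assoc. auto.
Qed.

Lemma firstn_prefix x m n : (m <= n)%nat -> firstn m (prefix x n) = prefix x m.
Proof.
  intros H. destruct (prefix_add x m (n - m)) as [s Hs].
  replace (m + (n - m))%nat with n in Hs by lia. rewrite Hs.
  rewrite firstn_app, prefix_len, Nat.sub_diag. simpl. rewrite app_nil_r.
  rewrite <- (prefix_len x m) at 1. apply firstn_all.
Qed.

Lemma in_cyl_prefix x n : in_cyl (prefix x n) x.
Proof. unfold in_cyl. rewrite prefix_len. auto. Qed.

Lemma dev_eq p q (hp : forall n, 0 <= p n <= 1) (hq : forall n, 0 <= q n <= 1) x n : (1 <= n)%nat -> 0 < cyl_mass p q (prefix x n) ->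
  ln (cyl_mass p q (prefix x n)) / (- INR n * ln 2) - c_seq p q n = - Zf p q n (prefix x n) / (INR n * ln 2).
Proof.
  intros Hn Hpos. rewrite (c_seq_eq p q hp hq). unfold Zf. unfold cyl_mass in *. rewrite (ln_mass p q hp hq) by auto.
  assert (0 < INR n) by (apply lt_0_INR; lia). pose proof ln_lt_2.
  field. split; lra.
Qed.

Definition sumL (l : list R) : R := fold_right Rplus 0 l.

Lemma sumL_app l1 l2 : sumL (l1 ++ l2) = sumL l1 + sumL l2.
Proof. induction l1; simpl; unfold sumL in *; simpl; [lra|]. rewrite IHl1; lra. Qed.

Lemma sumL_nonneg (f : list bool -> R) l : (forall w, 0 <= f w) -> 0 <= sumL (map f l).
Proof. intros H; induction l; simpl; unfold sumL in *; simpl; [lra|]. specialize (H a); lra. Qed.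

Lemma sum_flat_map {A} (f : list bool -> R) (st : A -> list (list bool)) l :
  sumL (map f (flat_map st l)) = sumL (map (fun m => sumL (map f (st m))) l).
Proof.
  induction l; simpl; [reflexivity|]. rewrite map_app, sumL_app, IHl. reflexivity.
Qed.

Definition bigl (st : nat -> list (list bool)) K := flat_map st (seq 0 (S K)).

Lemma bigl_S st K : bigl st (S K) = bigl st K ++ st (S K).
Proof. unfold bigl. rewrite (seq_S (S K)), flat_map_app. simpl. rewrite app_nil_r. auto. Qed.

Lemma bigl_len st K : (forall m, st m <> nil) -> (S K <= length (bigl st K))%nat.
Proof.
  intros H. induction K.
  - unfold bigl; simpl. rewrite app_nil_r. destruct (st 0%nat) eqn:E; [exfalso; apply (H 0%nat); auto|]. simpl; lia.
  - rewrite bigl_S, length_app. destruct (st (S K)) eqn:E; [exfalso; apply (H (S K)); auto|]. simpl; lia.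
Qed.

Lemma bigl_prefix st K d : exists s, bigl st (K + d) = bigl st K ++ s.
Proof.
  induction d as [|d [s IH]].
  - exists nil. rewrite Nat.add_0_r, app_nil_r. auto.
  - exists (s ++ st (S (K + d))). rewrite Nat.add_succ_r, bigl_S, IH, app_assoc. auto.
Qed.

Lemma bigl_nth st K K' i : (K <= K')%nat -> (i < length (bigl st K))%nat ->
  nth i (bigl st K') nil = nth i (bigl st K) nil.
Proof.
  intros HK Hi. destruct (bigl_prefix st K (K' - K)) as [s Hs].
  replace (K + (K' - K))%nat with K' in Hs by lia. rewrite Hs. apply app_nth1; auto.
Qed.

Definition Wf (st : nat -> list (list bool)) k := nth k (bigl st k) nil.

Lemma sum_nth_le (f : list bool -> R) l : (forall w, 0 <= f w) -> forall M, (M <= length l)%nat ->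
  sumL (map (fun k => f (nth k l nil)) (seq 0 M)) <= sumL (map f l).
Proof.
  intros Hf. induction l as [|a l IH]; intros M HM.
  - simpl in HM. replace M with 0%nat by lia. simpl. unfold sumL; simpl; lra.
  - destruct M as [|M].
    + simpl. unfold sumL at 1; simpl. apply (sumL_nonneg f (a :: l) Hf).
    + simpl in HM. simpl. unfold sumL in *. simpl.
      rewrite <- seq_shift, map_map. simpl.
      pose proof (IH M ltac:(lia)). lra.
Qed.

Lemma mu_null_stages p q (hp : forall n, 0 <= p n <= 1) (hq : forall n, 0 <= q n <= 1) (N : (nat -> bool) -> Prop) :
  (forall eps, eps > 0 -> exists st : nat -> list (list bool),
     (forall m, st m <> nil) /\
     (forall x, N x -> exists m w, In w (st m) /\ in_cyl w x) /\
     (forall M, sumL (map (fun m => msum p q (st m)) (seq 0 M)) <= eps)) ->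
  mu_null p q N.
Proof.
  intros H eps Heps. destruct (H eps Heps) as [st [Hne [Hcov Hsum]]].
  exists (Wf st). split.
  - intros x Nx. destruct (Hcov x Nx) as [m [w [Hin Hc]]].
    assert (Hb : In w (bigl st m)).
    { unfold bigl. apply in_flat_map. exists m. split; auto. apply in_seq. lia. }
    destruct (In_nth _ _ nil Hb) as [i [Hi Hw]].
    exists i. unfold Wf.
    assert (E : nth i (bigl st i) nil = w).
    { transitivity (nth i (bigl st (Nat.max i m)) nil).
      + symmetry. apply bigl_nth; [lia|]. apply (Nat.lt_le_trans _ _ _ (Nat.lt_succ_diag_r i) (bigl_len st i Hne)).
      + rewrite (bigl_nth st m (Nat.max i m) i) by lia. exact Hw. }
    rewrite E. exact Hc.
  - intros M. destruct M as [|M].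
    + simpl. lra.
    + change (fold_right Rplus 0 (map (fun k => cyl_mass p q (Wf st k)) (seq 0 (S M))))
        with (sumL (map (fun k => cyl_mass p q (Wf st k)) (seq 0 (S M)))).
      rewrite (map_ext_in _ (fun k => cyl_mass p q (nth k (bigl st M) nil))).
      2:{ intros k Hk. apply in_seq in Hk. unfold Wf. rewrite (bigl_nth st k M k); auto. lia.
          apply (Nat.lt_le_trans _ _ _ (Nat.lt_succ_diag_r k) (bigl_len st k Hne)). }
      eapply Rle_trans.
      { apply (sum_nth_le (cyl_mass p q)). intros w. apply (mass_nonneg p q hp hq). apply bigl_len; auto. }
      unfold bigl. rewrite sum_flat_map. apply Hsum.
Qed.

Fixpoint greedy p q k s L : list bool :=
  match L with
  | O => nil
  | S L => let b := if Rle_dec (step_factor p q k s false) (step_factor p q k s true) then false else true in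
           b :: greedy p q (S k) (Some b) L
  end.

Lemma greedy_mass p q (hp : forall n, 0 <= p n <= 1) (hq : forall n, 0 <= q n <= 1) L :
  forall k s, mass_aux p q k s (greedy p q k s L) <= (/2)^L.
Proof.
  induction L as [|L IH]; intros k s; simpl; [lra|].
  pose proof (sf_sum p q k s).
  destruct (Rle_dec (step_factor p q k s false) (step_factor p q k s true)) as [h|h]; simpl.
  - pose proof (IH (S k) (Some false)). pose proof (mass_nonneg p q hp hq (S k) (Some false) (greedy p q (S k) (Some false) L)).
    pose proof (sf_bounds p q hp hq k s false).
    assert (step_factor p q k s false <= /2) by lra.
    apply Rmult_le_compat; lra.
  - pose proof (IH (S k) (Some true)). pose proof (mass_nonneg p q hp hq (S k) (Some true) (greedy p q (S k) (Some true) L)).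
    pose proof (sf_bounds p q hp hq k s true).
    assert (step_factor p q k s true <= /2) by lra.
    apply Rmult_le_compat; lra.
Qed.

Definition th (m : nat) : R := / sqrt (sqrt (INR m)).
Definition Tm (m : nat) : R := INR (m * m) * th m / 2.

Definition zeros p q m := flat_map (fun L => filter (fun w => if Req_EM_T (cyl_mass p q w) 0 then true else false) (words L)) (seq 0 (S m)).
Definition badA p q m := filter (badf (Tm m) (Zf p q (m * m))) (words (m * m)).
Definition badB p q m := flat_map (fun n => filter (badf (Tm m) (Zw p q (m * m) n)) (words n)) (seq (m * m) (2 * m + 1)).
Definition core p q m := zeros p q m ++ badA p q m ++ badB p q m.

Lemma msum_app p q l1 l2 : msum p q (l1 ++ l2) = msum p q l1 + msum p q l2.
Proof. unfold msum. rewrite map_app. apply sumL_app. Qed.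

Lemma msum_zero_filter p q l : msum p q (filter (fun w => if Req_EM_T (cyl_mass p q w) 0 then true else false) l) = 0.
Proof.
  induction l as [|w l IH]; simpl; [reflexivity|].
  destruct (Req_EM_T (cyl_mass p q w) 0) as [E|E]; simpl; auto.
  unfold msum in *; simpl. rewrite E, IH. ring.
Qed.

Lemma sumL_const_le {A} (f : A -> R) l C : (forall x, In x l -> f x <= C) -> sumL (map f l) <= INR (length l) * C.
Proof.
  induction l as [|a l IH]; intros H; unfold sumL in *; cbn [map length fold_right]; [simpl; lra|].
  rewrite S_INR. pose proof (H a (or_introl eq_refl)). pose proof (IH (fun x h => H x (or_intror h))). lra.
Qed.

Lemma sumL_le {A} (f g : A -> R) l : (forall x, In x l -> f x <= g x) -> sumL (map f l) <= sumL (map g l).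
Proof.
  induction l as [|a l IH]; intros H; simpl; unfold sumL in *; simpl; [lra|].
  pose proof (H a (or_introl eq_refl)). pose proof (IH (fun x h => H x (or_intror h))). lra.
Qed.

Lemma th_pos m : (1 <= m)%nat -> 0 < th m.
Proof.
  intros Hm. unfold th. apply Rinv_0_lt_compat. apply sqrt_lt_R0. apply sqrt_lt_R0.
  apply lt_0_INR; lia.
Qed.

Lemma core_bound p q (hp : forall n, 0 <= p n <= 1) (hq : forall n, 0 <= q n <= 1) m : (1 <= m)%nat ->
  msum p q (core p q m) <= 3920 / (INR m * sqrt (INR m)).
Proof.
  intros Hm. unfold core. rewrite !msum_app.
  assert (Hz : msum p q (zeros p q m) = 0).
  { unfold zeros, msum. rewrite sum_flat_map. rewrite (map_ext _ (fun _ => 0)).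
    - clear. induction (seq 0 (S m)); simpl; unfold sumL in *; simpl; [lra|]. lra.
    - intros L. apply (msum_zero_filter p q). }
  assert (HT : 0 < Tm m).
  { unfold Tm. pose proof (th_pos m Hm). assert (0 < INR (m * m)) by (apply lt_0_INR; lia).
    apply Rmult_lt_0_compat; [|lra]. apply Rmult_lt_0_compat; lra. }
  assert (HA : msum p q (badA p q m) <= 140 * INR (m * m) / Tm m ^ 2).
  { unfold badA. eapply Rle_trans; [apply (cheb p q hp hq); auto|].
    unfold Rdiv. apply Rmult_le_compat_r; [left; apply Rinv_0_lt_compat; apply pow_lt; lra|].
    apply (varZf p q hp hq). }
  assert (HB : msum p q (badB p q m) <= INR (2 * m + 1) * (140 * INR (2 * m) / Tm m ^ 2)).
  { unfold badB, msum. rewrite sum_flat_map.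
    replace (INR (2 * m + 1)) with (INR (length (seq (m * m) (2 * m + 1)))) by (rewrite length_seq; auto).
    apply sumL_const_le.
    intros n Hn. apply in_seq in Hn.
    eapply Rle_trans; [apply (cheb p q hp hq); auto|].
    unfold Rdiv. apply Rmult_le_compat_r; [left; apply Rinv_0_lt_compat; apply pow_lt; lra|].
    eapply Rle_trans; [apply (varZw p q hp hq)|]. apply Rmult_le_compat_l; [lra|]. apply le_INR. lia. }
  rewrite Hz.
  set (r := sqrt (INR m)).
  assert (Hr : 0 < r) by (apply sqrt_lt_R0; apply lt_0_INR; lia).
  assert (Hrr : r * r = INR m) by (apply sqrt_sqrt; apply pos_INR).
  assert (Hsr : 0 < sqrt r) by (apply sqrt_lt_R0; auto).
  assert (Hsrr : sqrt r * sqrt r = r) by (apply sqrt_sqrt; lra).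
  assert (HT2 : Tm m ^ 2 = r^7 / 4).
  { unfold Tm, th. fold r. rewrite mult_INR. rewrite <- Hrr.
    field_simplify; [|lra]. replace (sqrt r ^ 2) with r by (simpl; lra). field. lra. }
  rewrite HT2 in HA, HB. rewrite mult_INR in HA, HB. rewrite plus_INR, mult_INR in HB. simpl (INR 2) in HB.
  simpl (INR 1) in HB. rewrite <- Hrr in HA, HB |- *.
  assert (H1 : 1 <= r * r) by (rewrite Hrr; apply (le_INR 1); lia).
  assert (E1 : 140 * (r * r * (r * r)) / (r ^ 7 / 4) = 560 / (r * r * r)) by (field; lra).
  assert (E2 : (1 + 1) * (r * r) * (140 * ((1 + 1) * (r * r)) / (r ^ 7 / 4)) = 2240 / (r * r * r)) by (field; lra).
  assert (E3 : 140 * ((1 + 1) * (r * r)) / (r ^ 7 / 4) = 1120 / (r * r * r * r * r)) by (field; lra).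
  rewrite E1 in HA. rewrite E3 in HB.
  assert (E4 : 3920 / (r * r * r) = 560 / (r * r * r) + 3360 / (r * r * r)) by (field; lra).
  rewrite E4.
  assert ((2 * (r * r) + 1) * (1120 / (r * r * r * r * r)) <= 3360 / (r * r * r)).
  { assert (E5 : (2 * (r * r) + 1) * (1120 / (r * r * r * r * r)) = (2240 * (r*r) + 1120) / (r * r * r * r * r)) by (field; lra).
    assert (E6 : 3360 / (r * r * r) = (3360 * (r * r)) / (r * r * r * r * r)) by (field; lra).
    rewrite E5, E6. unfold Rdiv. apply Rmult_le_compat_r.
    - left. apply Rinv_0_lt_compat. repeat apply Rmult_lt_0_compat; lra.
    - lra. }
  replace (r * r * r) with (r * r * r) by ring.
  lra.
Qed.

Lemma tail_term x : 2 <= x -> 3920 / (x * sqrt x) + 7840 / sqrt x <= 7840 / sqrt (x - 1).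
Proof.
  intros Hx. set (u := sqrt (x - 1)). set (v := sqrt x).
  assert (Hu : 0 < u) by (apply sqrt_lt_R0; lra).
  assert (Hv : 0 < v) by (apply sqrt_lt_R0; lra).
  assert (Huu : u * u = x - 1) by (apply sqrt_sqrt; lra).
  assert (Hvv : v * v = x) by (apply sqrt_sqrt; lra).
  assert (Hk : u * (1 + 2 * (v * v)) <= 2 * (v * v * v)).
  { apply Rsqr_incr_0_var; [|nra]. unfold Rsqr.
    assert (E : u * (1 + 2 * (v * v)) * (u * (1 + 2 * (v * v))) = (v*v - 1) * (1 + 2 * (v*v)) * (1 + 2*(v*v))) by nra.
    rewrite E. assert (0 <= v * v) by nra. nra. }
  rewrite <- Hvv.
  assert (E1 : 3920 / (v * v * v) + 7840 / v = 3920 * (1 + 2 * (v * v)) / (v * v * v)) by (field; lra).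
  rewrite E1.
  assert (E2 : 7840 / u = 3920 * (2 * (v * v * v)) / (u * (v * v * v))) by (field; lra).
  rewrite E2.
  assert (E3 : 3920 * (1 + 2 * (v * v)) / (v * v * v) = 3920 * (u * (1 + 2 * (v * v))) / (u * (v * v * v))) by (field; lra).
  rewrite E3. unfold Rdiv. apply Rmult_le_compat_r.
  - left. apply Rinv_0_lt_compat. repeat apply Rmult_lt_0_compat; lra.
  - lra.
Qed.

Definition tailf (M0 m : nat) : R := if (M0 <=? m)%nat then 3920 / (INR m * sqrt (INR m)) else 0.

Lemma tail_sum M0 : (2 <= M0)%nat -> forall M,
  sumL (map (tailf M0) (seq 0 M)) + 7840 / sqrt (INR (Nat.max M M0 - 1)) <= 7840 / sqrt (INR (M0 - 1)).
Proof.
  intros H0 M. induction M as [|M IH].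
  - simpl. unfold sumL; simpl. lra.
  - rewrite seq_S, map_app, sumL_app. simpl (map _ (_ :: nil)). unfold sumL at 2. simpl fold_right.
    unfold tailf at 2. destruct (Nat.leb_spec M0 M) as [h|h].
    + replace (Nat.max (S M) M0 - 1)%nat with M in * by lia.
      replace (Nat.max M M0 - 1)%nat with (M - 1)%nat in IH by lia.
      rewrite minus_INR in IH by lia. simpl (INR 1) in IH.
      assert (2 <= INR M) by (apply (le_INR 2); lia).
      pose proof (tail_term (INR M) H). lra.
    + replace (Nat.max (S M) M0) with M0 by lia. replace (Nat.max M M0) with M0 in IH by lia. lra.
Qed.

Lemma pad_sum c0 M : sumL (map (fun m => (/2)^(m + c0)) (seq 0 M)) = 2 * (/2)^c0 * (1 - (/2)^M).
Proof.
  induction M as [|M IH].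
  - simpl. unfold sumL; simpl. ring.
  - rewrite seq_S, map_app, sumL_app, IH. unfold sumL; simpl. rewrite pow_add. field.
Qed.

Lemma th_small e : e > 0 -> exists m1, forall m, (m1 <= m)%nat -> th m <= e.
Proof.
  intros He. set (A := / e). assert (HA : 0 < A) by (unfold A; apply Rinv_0_lt_compat; lra).
  destruct (INR_unbounded ((A^2)^2)) as [m1 Hm1]. exists m1. intros m Hm.
  assert (HmA : (A^2)^2 <= INR m) by (pose proof (le_INR _ _ Hm); lra).
  assert (H1 : A^2 <= sqrt (INR m)).
  { rewrite <- (sqrt_pow2 (A^2)) by (apply pow_le; lra). apply sqrt_le_1_alt; auto. }
  assert (H2 : A <= sqrt (sqrt (INR m))).
  { rewrite <- (sqrt_pow2 A) by lra. apply sqrt_le_1_alt; auto. }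
  unfold th. replace e with (/ A) by (unfold A; field; lra).
  apply Rinv_le_contravar; auto.
Qed.

Lemma sumL_map_plus {A} (f g : A -> R) l : sumL (map (fun x => f x + g x) l) = sumL (map f l) + sumL (map g l).
Proof. induction l; unfold sumL in *; simpl; [lra|]. rewrite IHl. ring. Qed.

Lemma tailf_nonneg M0 m : 0 <= tailf M0 m.
Proof.
  unfold tailf. destruct (M0 <=? m)%nat; [|lra].
  destruct m; [simpl; rewrite sqrt_0; unfold Rdiv; rewrite Rmult_0_l, Rinv_0; lra|].
  assert (0 < INR (S m)) by (apply lt_0_INR; lia). assert (0 < sqrt (INR (S m))) by (apply sqrt_lt_R0; lra).
  unfold Rdiv. apply Rmult_le_pos; [lra|]. left. apply Rinv_0_lt_compat. apply Rmult_lt_0_compat; lra.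
Qed.

Theorem mainTheorem6 (p q : nat -> R)
  (hp : forall n, 0 <= p n <= 1) (hq : forall n, 0 <= q n <= 1) :
  mu_null p q (fun x =>
    ~ Un_cv (fun n => ln (cyl_mass p q (prefix x n)) / (- INR n * ln 2) - c_seq p q n) 0).
Proof.
  apply (mu_null_stages p q hp hq). intros eps Heps.
  assert (Hh : Rabs (/2) < 1) by (rewrite Rabs_pos_eq; lra).
  destruct (pow_lt_1_zero (/2) Hh (eps/4) ltac:(lra)) as [c0 Hc0].
  specialize (Hc0 c0 (Nat.le_refl _)). rewrite Rabs_pos_eq in Hc0 by (apply pow_le; lra).
  destruct (INR_unbounded ((15680/eps)^2)) as [J HJ].
  set (M0 := (J + 2)%nat).
  assert (HM0 : 7840 / sqrt (INR (M0 - 1)) <= eps/2).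
  { replace (M0 - 1)%nat with (S J) by (unfold M0; lia). rewrite S_INR.
    assert (Hs : 15680/eps <= sqrt (INR J + 1)).
    { rewrite <- (sqrt_pow2 (15680/eps)) by (unfold Rdiv; apply Rmult_le_pos; [lra|left; apply Rinv_0_lt_compat; lra]).
      apply sqrt_le_1_alt. lra. }
    assert (0 < 15680/eps) by (unfold Rdiv; apply Rmult_lt_0_compat; [lra|apply Rinv_0_lt_compat; lra]).
    assert (7840 / sqrt (INR J + 1) <= 7840 / (15680/eps)).
    { unfold Rdiv at 1 2. apply Rmult_le_compat_l; [lra|]. apply Rinv_le_contravar; lra. }
    replace (7840 / (15680 / eps)) with (eps/2) in H0 by (field; lra). lra. }
  exists (fun m => greedy p q 0 None (m + c0) :: (if (M0 <=? m)%nat then core p q m else nil)).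
  split; [intros m; discriminate|]. split.
  - intros x Hbad.
    destruct (classic (exists L, cyl_mass p q (prefix x L) = 0)) as [[L HL]|Hpos].
    + exists (Nat.max L M0), (prefix x L). split; [|apply in_cyl_prefix].
      right. replace ((M0 <=? Nat.max L M0)%nat) with true by (symmetry; apply Nat.leb_le; lia).
      unfold core. apply in_or_app; left. unfold zeros. apply in_flat_map. exists L.
      split; [apply in_seq; lia|]. apply filter_In. split.
      * pose proof (words_in (prefix x L)) as Hw. rewrite prefix_len in Hw. exact Hw.
      * destruct (Req_EM_T (cyl_mass p q (prefix x L)) 0); auto.
    + assert (Hpos' : forall L, 0 < cyl_mass p q (prefix x L)).
      { intros L. pose proof (mass_nonneg p q hp hq 0 None (prefix x L)) as Hn. unfold cyl_mass in *.
        destruct (Rle_lt_or_eq_dec 0 _ Hn) as [h|h]; auto. exfalso; apply Hpos. exists L. auto. }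
      set (u := fun n => ln (cyl_mass p q (prefix x n)) / (- INR n * ln 2) - c_seq p q n) in *.
      assert (Hex : exists e0, e0 > 0 /\ forall N, exists n, (n >= N)%nat /\ e0 <= Rabs (u n)).
      { apply NNPP; intro Hn; apply Hbad; intros e He. apply NNPP; intro Hne. apply Hn.
        exists e. split; auto. intros N. apply NNPP; intro Hno. apply Hne. exists N.
        intros n Hn'. unfold R_dist. rewrite Rminus_0_r. apply Rnot_le_lt. intro Hle.
        apply Hno. exists n. split; auto. }
      destruct Hex as [e0 [He0 Hio]].
      pose proof ln_lt_2 as Hln2.
      destruct (th_small (e0 * ln 2) ltac:(apply Rmult_lt_0_compat; lra)) as [m1 Hm1].
      set (B := Nat.max M0 (Nat.max m1 1)).
      destruct (Hio ((B + 1) * (B + 1))%nat) as [n [Hn Hdev]].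
      set (m := Nat.sqrt n).
      assert (Hm : (B + 1 <= m)%nat).
      { unfold m. rewrite <- (Nat.sqrt_square (B + 1)). apply Nat.sqrt_le_mono. lia. }
      destruct (Nat.sqrt_spec n (Nat.le_0_l n)) as [Hs1 Hs2]. fold m in Hs1, Hs2.
      assert (Hn1 : (1 <= n)%nat) by nia.
      unfold u in Hdev. rewrite (dev_eq p q hp hq x n Hn1 (Hpos' n)) in Hdev.
      set (w := prefix x n) in *.
      assert (HnR : 0 < INR n) by (apply lt_0_INR; lia).
      assert (HZ : e0 * (INR n * ln 2) <= Rabs (Zf p q n w)).
      { replace (- Zf p q n w / (INR n * ln 2)) with (- Zf p q n w * / (INR n * ln 2)) in Hdev by auto.
        rewrite Rabs_mult, Rabs_Ropp, (Rabs_pos_eq (/ _)) in Hdev by (left; apply Rinv_0_lt_compat; nra).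
        apply (Rmult_le_compat_r (INR n * ln 2)) in Hdev; [|nra].
        rewrite Rmult_assoc, Rinv_l in Hdev by nra. lra. }
      assert (Hth : th m <= e0 * ln 2) by (apply Hm1; lia).
      assert (Hthp : 0 < th m) by (apply th_pos; lia).
      assert (HmmR : INR (m * m) <= INR n) by (apply le_INR; lia).
      assert (H2T : 2 * Tm m <= Rabs (Zf p q n w)).
      { unfold Tm. assert (th m * INR (m * m) <= e0 * ln 2 * INR n).
        { apply Rmult_le_compat; try lra. apply pos_INR. }
        lra. }
      rewrite (Z_split p q (m * m) n w) in H2T by lia.
      unfold w in H2T at 1. rewrite firstn_prefix in H2T by lia.
      assert (HM0m : (M0 <=? m)%nat = true) by (apply Nat.leb_le; lia).
      destruct (Rle_dec (Tm m) (Rabs (Zf p q (m * m) (prefix x (m * m))))) as [hA|hA].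
      * exists m, (prefix x (m * m)). split; [|apply in_cyl_prefix].
        right. rewrite HM0m. unfold core. apply in_or_app; right. apply in_or_app; left.
        unfold badA. apply filter_In. split.
        -- pose proof (words_in (prefix x (m * m))) as Hw. rewrite prefix_len in Hw. exact Hw.
        -- unfold badf. destruct (Rle_dec _ _); auto.
      * assert (hB : Tm m <= Rabs (Zw p q (m * m) n w)).
        { pose proof (Rabs_triang (Zf p q (m * m) (prefix x (m * m))) (Zw p q (m * m) n w)). lra. }
        exists m, w. split; [|apply in_cyl_prefix].
        right. rewrite HM0m. unfold core. apply in_or_app; right. apply in_or_app; right.
        unfold badB. apply in_flat_map. exists n. split; [apply in_seq; nia|].
        apply filter_In. split.
        -- pose proof (words_in w) as Hw. unfold w in Hw at 2. rewrite prefix_len in Hw. exact Hw.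
        -- unfold badf. destruct (Rle_dec _ _); auto.
  - intros M.
    eapply Rle_trans.
    { apply (sumL_le _ (fun m => (/2)^(m + c0) + tailf M0 m)). intros m _.
      unfold msum. cbn [map fold_right]. fold (msum p q (if (M0 <=? m)%nat then core p q m else nil)).
      pose proof (greedy_mass p q hp hq (m + c0) 0 None) as Hg. unfold cyl_mass.
      assert (msum p q (if (M0 <=? m)%nat then core p q m else nil) <= tailf M0 m).
      { unfold tailf. destruct (Nat.leb_spec M0 m).
        - apply (core_bound p q hp hq). unfold M0 in *; lia.
        - unfold msum; simpl; lra. }
      lra. }
    rewrite sumL_map_plus, pad_sum.
    pose proof (tail_sum M0 ltac:(unfold M0; lia) M) as HT.
    assert (0 <= 7840 / sqrt (INR (Nat.max M M0 - 1))).
    { unfold Rdiv. apply Rmult_le_pos; [lra|].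
      destruct (Rle_lt_or_eq_dec 0 _ (sqrt_pos (INR (Nat.max M M0 - 1)))) as [h|h].
      - left; apply Rinv_0_lt_compat; auto.
      - rewrite <- h, Rinv_0; lra. }
    assert (0 <= (/2)^M) by (apply pow_le; lra).
    assert (0 <= (/2)^c0) by (apply pow_le; lra).
    assert (2 * (/2)^c0 * (1 - (/2)^M) <= 2 * (/2)^c0) by nra.
    lra.
Qed.
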